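(* Let $f\in\ell_1(\mathbb{Z})$ be non-negative, let $m,N\in\mathbb{N}$, $p\in(0,1)$, $H,\mu>0$, and assume $\|f\|_\infty\leq 2H$ and that for every integer interval $I$ of cardinality $N$, $|\{t\in I:\ f(t)\geq H\}|\leq\mu N$. Let $x_1,\dots,x_m$ be any integers and set $\widetilde f(t)=\mathbb{E}_b f(t+b_1x_1+\dots+b_mx_m)$, where $b=(b_1,\dots,b_m)$ has independent Bernoulli($p$) components. Then for every integer interval $J$ of cardinality $N$, $$|\{t\in J:\ \widetilde f(t)\geq\sqrt2 H\}|\leq \mu N/(\sqrt2-1).$$
   Context: A Bernoulli($p$) random variable takes value $1$ with probability $p$ and $0$ with probability $1-p$. *)

(* Defs.v *)
From HB Require Import structures.
From mathcomp Require Import all_boot all_order all_algebra.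
From mathcomp Require Import reals.
Set Implicit Arguments. Unset Strict Implicit. Unset Printing Implicit Defensive.
Import Order.TTheory GRing.Theory Num.Theory.
Local Open Scope ring_scope.

Definition l1_int (R : realType) (f : int -> R) : Prop :=
  exists B : R, forall n : nat,
    \sum_(k < n) (`|f (k%:Z)| + `|f (- (k.+1)%:Z)|) <= B.

Definition count_in_interval (P : pred int) (a : int) (N : nat) : nat :=
  count (fun k : nat => P (a + k%:Z)) (iota 0 N).

Definition bern_weight (R : realType) (p : R) (m : nat) (b : {ffun 'I_m -> bool}) : R :=
  \prod_(i < m) (if b i then p else 1 - p).

Definition ftilde (R : realType) (p : R) (m : nat) (x : 'I_m -> int) (f : int -> R)
    (t : int) : R :=
  \sum_(b : {ffun 'I_m -> bool})
     bern_weight p b * f (t + \sum_(i < m) (if b i then x i else 0)).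

(* Main.v *)
Require Import Defs.
From HB Require Import structures.
From mathcomp Require Import all_boot all_order all_algebra.
From mathcomp Require Import reals lra.
Import Order.TTheory GRing.Theory Num.Theory.
Local Open Scope ring_scope.

Lemma count_sumR (R : realType) (P : pred int) a N :
  (count_in_interval P a N)%:R = \sum_(k <- iota 0 N) ((P (a + k%:Z))%:R : R).
Proof.
rewrite /count_in_interval -sum1_count natr_sum big_mkcond /=.
by apply: eq_bigr => k _; case: (P _).
Qed.

Theorem lemma4p10 (R : realType) (f : int -> R) (m N : nat) (p H mu : R)
  (x : 'I_m -> int)
  (hf0 : forall t, 0 <= f t) (hl1 : l1_int f)
  (hp : 0 < p < 1) (hH : 0 < H) (hmu : 0 < mu)
  (hinf : forall t, `|f t| <= 2 * H)
  (hI : forall a : int,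
     (count_in_interval (fun t => H <= f t) a N)%:R <= mu * N%:R) :
  forall a : int,
    (count_in_interval (fun t => Num.sqrt 2 * H <= ftilde p x f t) a N)%:R
      <= mu * N%:R / (Num.sqrt 2 - 1).
Proof.
move=> a.
case/andP: hp => hp0 hp1.
set c := Num.sqrt 2 - 1.
have hc : 0 < c.
  rewrite /c subr_gt0 -{1}sqrtr1 ltr_sqrt //; lra.
set w := fun b : {ffun 'I_m -> bool} => bern_weight p b.
have hw0 : forall b, 0 <= w b.
  move=> b; rewrite /w /bern_weight; apply: prodr_ge0 => i _.
  case: (b i); lra.
have hw1 : \sum_b w b = 1.
  rewrite /w /bern_weight.
  rewrite -(bigA_distr_bigA (fun (i : 'I_m) (bb : bool) => if bb then p else 1 - p)).
  apply: big1 => i _.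
  rewrite big_bool /=; lra.
set s := fun b : {ffun 'I_m -> bool} => \sum_(i < m) (if b i then x i else 0).
set E := fun t : int => (((H <= f t)%R : bool)%:R : R).
have hE0 : forall t, 0 <= E t by move=> t; rewrite /E ler0n.
have hfE : forall t, f t <= H + H * E t.
  move=> t; rewrite /E; case h: (H <= f t); rewrite /= ?mulr1 ?mulr0 ?addr0.
    have := hinf t; rewrite ger0_norm //; lra.
  move/negbT: h; rewrite -ltNge => h; lra.
set Et := fun t => \sum_b w b * E (t + s b).
have hEt0 : forall t, 0 <= Et t.
  move=> t; apply: sumr_ge0 => b _; exact: mulr_ge0.
have hft : forall t, ftilde p x f t <= H + H * Et t.
  move=> t; rewrite /ftilde -/w.
  apply: (@le_trans _ _ (\sum_b w b * (H + H * E (t + s b)))).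
    apply: ler_sum => b _; apply: ler_wpM2l => //; exact: hfE.
  rewrite /Et mulr_sumr -[X in X + _]mulr1 -hw1 mulr_sumr -big_split /=.
  rewrite le_eqVlt; apply/orP; left; apply/eqP; apply: eq_bigr => b _; lra.
rewrite count_sumR.
apply: (@le_trans _ _ (\sum_(k <- iota 0 N) Et (a + k%:Z) / c)).
  apply: ler_sum => k _ /=; case h: (Num.sqrt 2 * H <= ftilde p x f (a + k%:Z)).
    rewrite ler_pdivlMr // mul1r.
    have := hft (a + k%:Z).
    move: h; rewrite /c; set y := Et _; set z := ftilde _ _ _ _ => h1 h2.
    have : H * (Num.sqrt 2 - 1) <= H * y by lra.
    by rewrite ler_pM2l.
  by apply: divr_ge0 => //; apply: ltW.
rewrite -mulr_suml ler_pM2r ?invr_gt0 //.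
rewrite /Et exchange_big /=.
apply: (@le_trans _ _ (\sum_b w b * (mu * N%:R))); last first.
  by rewrite -mulr_suml hw1 mul1r.
apply: ler_sum => b _; rewrite -mulr_sumr; apply: ler_wpM2l => //.
apply: le_trans (hI (a + s b)).
rewrite count_sumR le_eqVlt; apply/orP; left; apply/eqP.
by apply: eq_bigr => k _; rewrite /E addrAC.
Qed.
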